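(* In the genomic PCR model with amplification probabilities $p_g,p_{g_d},p_h,p_{h_d}\in[0,1]$ and $p_a,p_{a_d}\in(0,1]$, started from a single genomic strand pair $(g,g_d)$, let $r=\sqrt{p_ap_{a_d}}$. Then the expected number of dye-tagged amplicons $a_d$ after $n\ge0$ cycles is $$\frac{p_gp_{h_d}}{p_ap_{a_d}}\left(\sqrt{\frac{p_a}{p_{a_d}}}\,\frac{(1+r)^n-(1-r)^n}{2}-np_a\right)+\frac{p_{g_d}p_h}{p_ap_{a_d}}\left(\frac{(1+r)^n+(1-r)^n}{2}-1\right).$$ In particular, if all six amplification probabilities equal $p\in(0,1]$, the expected number is $(1+p)^n-np-1$.
   Context: The genomic PCR model is a multi-type discrete-time branching process with six strand types $g,g_d,h,h_d,a,a_d$; all strands persist forever. In each cycle, independently, each existing strand produces one new strand with a type-specific probability (and otherwise nothing): a $g$ strand produces an $h_d$ strand with probability $p_g$; a $g_d$ strand produces an $h$ strand with probability $p_{g_d}$; an $h$ strand produces an $a_d$ strand with probability $p_h$; an $h_d$ strand produces an $a$ strand with probability $p_{h_d}$; an $a$ strand produces an $a_d$ strand with probability $p_a$; an $a_d$ strand produces an $a$ strand with probability $p_{a_d}$. The process is started from exactly one $g$ and one $g_d$ strand and no other strands. Strands of type $a_d$ are called dye-tagged amplicons. *)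

(* Defs.v *)
From Stdlib Require Import Reals List.
Open Scope R_scope.

(** All strands persist forever; in each cycle every
    existing strand independently produces one new strand of a prescribed type
    with a type-specific probability.  Since strands of the same type behave
    identically and independently, the number of new strands produced in one
    cycle by the [k] strands of a given type is Binomial(k, p_type), and these
    six binomial counts are independent.  We therefore represent the process by
    the (exact, finitely supported) law of its vector of strand counts. *)

Record state := mkState {
  n_g : nat; n_gd : nat; n_h : nat; n_hd : nat; n_a : nat; n_ad : nat }.

Definition fdist (A : Type) := list (R * A).

Definition fret {A : Type} (x : A) : fdist A := (1, x) :: nil.

Definition fbind {A B : Type} (d : fdist A) (f : A -> fdist B) : fdist B :=
  flat_map (fun wx => map (fun vy => (fst wx * fst vy, snd vy)) (f (snd wx))) d.

Definition binom (p : R) (m : nat) : fdist nat :=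
  map (fun k => (C m k * p ^ k * (1 - p) ^ (m - k), k)) (seq 0 (S m)).

(** One PCR cycle from state [s]:
    g -> h_d (p_g), g_d -> h (p_gd), h -> a_d (p_h), h_d -> a (p_hd),
    a -> a_d (p_a), a_d -> a (p_ad). *)
Definition pcr_step (pg pgd ph phd pa pad : R) (s : state) : fdist state :=
  fbind (binom pg  (n_g s))  (fun x1 =>
  fbind (binom pgd (n_gd s)) (fun x2 =>
  fbind (binom ph  (n_h s))  (fun x3 =>
  fbind (binom phd (n_hd s)) (fun x4 =>
  fbind (binom pa  (n_a s))  (fun x5 =>
  fbind (binom pad (n_ad s)) (fun x6 =>
  fret (mkState (n_g s) (n_gd s) (n_h s + x2)%nat (n_hd s + x1)%nat
                (n_a s + x4 + x6)%nat (n_ad s + x3 + x5)%nat))))))).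

Definition pcr_init : state := mkState 1 1 0 0 0 0.

Fixpoint pcr_law (pg pgd ph phd pa pad : R) (n : nat) : fdist state :=
  match n with
  | O => fret pcr_init
  | S n' => fbind (pcr_law pg pgd ph phd pa pad n') (pcr_step pg pgd ph phd pa pad)
  end.

Definition fexpect {A : Type} (d : fdist A) (f : A -> R) : R :=
  fold_right (fun wx acc => fst wx * f (snd wx) + acc) 0 d.

Definition expected_ad (pg pgd ph phd pa pad : R) (n : nat) : R :=
  fexpect (pcr_law pg pgd ph phd pa pad n) (fun s => INR (n_ad s)).

(* Main.v *)
Require Import Defs.
From Stdlib Require Import Reals List Lra Lia Arith Factorial.
Open Scope R_scope.

Lemma fexpect_app {A} (d1 d2 : fdist A) f :
  fexpect (d1 ++ d2) f = fexpect d1 f + fexpect d2 f.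
Proof. induction d1 as [|[w x] d IH]; simpl; [ring| rewrite IH; ring]. Qed.

Lemma fexpect_map_w {A} w (l : fdist A) f :
  fexpect (map (fun vy => (w * fst vy, snd vy)) l) f = w * fexpect l f.
Proof. induction l as [|[w' x] d IH]; simpl; [ring| rewrite IH; ring]. Qed.

Lemma fexpect_bind {A B} (d : fdist A) (f : A -> fdist B) g :
  fexpect (fbind d f) g = fexpect d (fun x => fexpect (f x) g).
Proof.
  induction d as [|[w x] d IH]; simpl; [ring|].
  unfold fbind in *; simpl. rewrite fexpect_app, fexpect_map_w, IH. ring.
Qed.

Lemma fexpect_ext {A} (d : fdist A) f g :
  (forall x, f x = g x) -> fexpect d f = fexpect d g.
Proof. intro H; induction d as [|[w x] d IH]; simpl; [ring| rewrite IH, H; ring]. Qed.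

Lemma fexpect_aff {A} (d : fdist A) K B g :
  fexpect d (fun x => K + B * g x) = K * fexpect d (fun _ => 1) + B * fexpect d g.
Proof. induction d as [|[w x] d IH]; simpl; [ring| rewrite IH; ring]. Qed.

Lemma fexpect_seq (w : nat -> R) (f : nat -> R) : forall n a,
  fexpect (map (fun k => (w k, k)) (seq a (S n))) f
  = sum_f_R0 (fun i => w (a + i)%nat * f (a + i)%nat) n.
Proof.
  induction n as [|n IH]; intro a.
  - simpl. rewrite Nat.add_0_r. ring.
  - change (seq a (S (S n))) with (a :: seq (S a) (S n)).
    cbn [map fexpect fold_right fst snd]. fold (fexpect (map (fun k => (w k, k)) (seq (S a) (S n))) f).
    rewrite IH. rewrite (decomp_sum _ (S n)) by lia. simpl pred.
    rewrite Nat.add_0_r. f_equal. apply sum_eq. intros i _.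
    replace (S a + i)%nat with (a + S i)%nat by lia. reflexivity.
Qed.

Lemma binom_sum p m f :
  fexpect (binom p m) f = sum_f_R0 (fun k => C m k * p ^ k * (1 - p) ^ (m - k) * f k) m.
Proof. unfold binom. rewrite fexpect_seq. apply sum_eq. intros. reflexivity. Qed.

Lemma binom_mass p m : fexpect (binom p m) (fun _ => 1) = 1.
Proof.
  rewrite binom_sum.
  rewrite (sum_eq _ (fun k => C m k * p ^ k * (1 - p) ^ (m - k))) by (intros; ring).
  rewrite <- binomial. replace (p + (1 - p)) with 1 by ring. apply pow1.
Qed.

Lemma C_shift m i : (i <= m)%nat -> C (S m) (S i) * INR (S i) = INR (S m) * C m i.
Proof.
  intro Hi. unfold C. replace (S m - S i)%nat with (m - i)%nat by lia.
  change (fact (S m)) with (S m * fact m)%nat.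
  change (fact (S i)) with (S i * fact i)%nat.
  rewrite !mult_INR. field.
  repeat split; try apply INR_fact_neq_0. apply not_0_INR. lia.
Qed.

Lemma binom_mean p m : fexpect (binom p m) (fun k => INR k) = INR m * p.
Proof.
  rewrite binom_sum. destruct m as [|m].
  - simpl. ring.
  - rewrite (decomp_sum _ (S m)) by lia. simpl pred.
    rewrite (sum_eq _ (fun i => C m i * p ^ i * (1 - p) ^ (m - i) * (INR (S m) * p))).
    + rewrite <- scal_sum, <- binomial. replace (p + (1 - p)) with 1 by ring.
      rewrite pow1. simpl INR at 1. ring.
    + intros i Hi. replace (S m - S i)%nat with (m - i)%nat by lia.
      replace (C (S m) (S i) * p ^ S i * (1 - p) ^ (m - i) * INR (S i))
        with ((C (S m) (S i) * INR (S i)) * p ^ S i * (1 - p) ^ (m - i)) by ring.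
      rewrite C_shift by lia. simpl pow. ring.
Qed.

Lemma Ebinom_aff p m K B :
  fexpect (binom p m) (fun k => K + B * INR k) = K + B * (INR m * p).
Proof. rewrite fexpect_aff, binom_mass, binom_mean. ring. Qed.

Lemma bind_aff {B} p m (f : nat -> fdist B) g K Bc Rr :
  (forall k, fexpect (f k) g = K + Bc * INR k) -> K + Bc * (INR m * p) = Rr ->
  fexpect (fbind (binom p m) f) g = Rr.
Proof.
  intros H1 H2. rewrite fexpect_bind.
  rewrite (fexpect_ext _ _ (fun k => K + Bc * INR k)) by auto.
  rewrite Ebinom_aff. exact H2.
Qed.

Definition Lc (c0 c1 c2 c3 c4 c5 c6 : R) (s : state) : R :=
  c0 + c1 * INR (n_g s) + c2 * INR (n_gd s) + c3 * INR (n_h s) + c4 * INR (n_hd s)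
  + c5 * INR (n_a s) + c6 * INR (n_ad s).

Lemma step_L pg pgd ph phd pa pad s c0 c1 c2 c3 c4 c5 c6 :
  fexpect (pcr_step pg pgd ph phd pa pad s) (Lc c0 c1 c2 c3 c4 c5 c6) =
  c0 + c1 * INR (n_g s) + c2 * INR (n_gd s)
  + c3 * (INR (n_h s) + pgd * INR (n_gd s))
  + c4 * (INR (n_hd s) + pg * INR (n_g s))
  + c5 * (INR (n_a s) + phd * INR (n_hd s) + pad * INR (n_ad s))
  + c6 * (INR (n_ad s) + ph * INR (n_h s) + pa * INR (n_a s)).
Proof.
  unfold pcr_step.
  set (V0 := c0 + c1 * INR (n_g s) + c2 * INR (n_gd s) + c3 * INR (n_h s) + c4 * INR (n_hd s)
  + c5 * INR (n_a s) + c6 * INR (n_ad s)).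
  set (T2 := c3 * (INR (n_gd s) * pgd)).
  set (T3 := c6 * (INR (n_h s) * ph)).
  set (T4 := c5 * (INR (n_hd s) * phd)).
  set (T5 := c6 * (INR (n_a s) * pa)).
  set (T6 := c5 * (INR (n_ad s) * pad)).
  apply (bind_aff pg (n_g s) _ _ (V0 + T2 + T3 + T4 + T5 + T6) c4);
    [intro x1 | unfold V0, T2, T3, T4, T5, T6; ring].
  apply (bind_aff pgd (n_gd s) _ _ (V0 + c4 * INR x1 + T3 + T4 + T5 + T6) c3);
    [intro x2 | unfold T2; ring].
  apply (bind_aff ph (n_h s) _ _ (V0 + c4 * INR x1 + c3 * INR x2 + T4 + T5 + T6) c6);
    [intro x3 | unfold T3; ring].
  apply (bind_aff phd (n_hd s) _ _
    (V0 + c4 * INR x1 + c3 * INR x2 + c6 * INR x3 + T5 + T6) c5);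
    [intro x4 | unfold T4; ring].
  apply (bind_aff pa (n_a s) _ _
    (V0 + c4 * INR x1 + c3 * INR x2 + c6 * INR x3 + c5 * INR x4 + T6) c6);
    [intro x5 | unfold T5; ring].
  apply (bind_aff pad (n_ad s) _ _
    (V0 + c4 * INR x1 + c3 * INR x2 + c6 * INR x3 + c5 * INR x4 + c6 * INR x5) c5);
    [intro x6 | unfold T6; ring].
  unfold fexpect, fret, Lc, V0. simpl. rewrite !plus_INR. ring.
Qed.

Lemma lin_L (d : fdist state) c0 c1 c2 c3 c4 c5 c6 :
  fexpect d (Lc c0 c1 c2 c3 c4 c5 c6) =
  c0 * fexpect d (fun _ => 1) + c1 * fexpect d (fun s => INR (n_g s))
  + c2 * fexpect d (fun s => INR (n_gd s)) + c3 * fexpect d (fun s => INR (n_h s))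
  + c4 * fexpect d (fun s => INR (n_hd s)) + c5 * fexpect d (fun s => INR (n_a s))
  + c6 * fexpect d (fun s => INR (n_ad s)).
Proof. induction d as [|[w x] d IH]; simpl; [ring| rewrite IH; unfold Lc; ring]. Qed.

Section Law.
Variables pg pgd ph phd pa pad : R.

Definition Ef n (f : state -> R) := fexpect (pcr_law pg pgd ph phd pa pad n) f.

Lemma rec_L n c0 c1 c2 c3 c4 c5 c6 :
  Ef (S n) (Lc c0 c1 c2 c3 c4 c5 c6) =
  Ef n (Lc c0 (c1 + c4 * pg) (c2 + c3 * pgd) (c3 + c6 * ph) (c4 + c5 * phd)
           (c5 + c6 * pa) (c6 + c5 * pad)).
Proof.
  unfold Ef. cbn [pcr_law]. rewrite fexpect_bind. apply fexpect_ext. intro s.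
  rewrite step_L. unfold Lc. ring.
Qed.

Definition M n := Ef n (fun _ => 1).
Definition G n := Ef n (fun s => INR (n_g s)).
Definition GD n := Ef n (fun s => INR (n_gd s)).
Definition H n := Ef n (fun s => INR (n_h s)).
Definition HD n := Ef n (fun s => INR (n_hd s)).
Definition A n := Ef n (fun s => INR (n_a s)).
Definition AD n := Ef n (fun s => INR (n_ad s)).

Lemma rec_all n c0 c1 c2 c3 c4 c5 c6 :
  Ef (S n) (Lc c0 c1 c2 c3 c4 c5 c6) =
  c0 * M n + (c1 + c4 * pg) * G n + (c2 + c3 * pgd) * GD n + (c3 + c6 * ph) * H n
  + (c4 + c5 * phd) * HD n + (c5 + c6 * pa) * A n + (c6 + c5 * pad) * AD n.
Proof. rewrite rec_L. unfold Ef. rewrite lin_L. reflexivity. Qed.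

Ltac coord n c := unfold Ef;
  rewrite (fexpect_ext _ _ c) by (intro; unfold Lc; ring); fold (Ef (S n) c);
  rewrite rec_all; unfold M, G, GD, H, HD, A, AD, Ef.

Lemma M_S n : M (S n) = M n.
Proof. unfold M. coord n (Lc 1 0 0 0 0 0 0). ring. Qed.
Lemma G_S n : G (S n) = G n.
Proof. unfold G. coord n (Lc 0 1 0 0 0 0 0). ring. Qed.
Lemma GD_S n : GD (S n) = GD n.
Proof. unfold GD. coord n (Lc 0 0 1 0 0 0 0). ring. Qed.
Lemma H_S n : H (S n) = H n + pgd * GD n.
Proof. unfold H. coord n (Lc 0 0 0 1 0 0 0). ring. Qed.
Lemma HD_S n : HD (S n) = HD n + pg * G n.
Proof. unfold HD. coord n (Lc 0 0 0 0 1 0 0). ring. Qed.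
Lemma A_S n : A (S n) = A n + phd * HD n + pad * AD n.
Proof. unfold A. coord n (Lc 0 0 0 0 0 1 0). ring. Qed.
Lemma AD_S n : AD (S n) = AD n + ph * H n + pa * A n.
Proof. unfold AD. coord n (Lc 0 0 0 0 0 0 1). ring. Qed.

Lemma G_1 n : G n = 1.
Proof. induction n; [unfold G, Ef; simpl; ring | rewrite G_S; auto]. Qed.
Lemma GD_1 n : GD n = 1.
Proof. induction n; [unfold GD, Ef; simpl; ring | rewrite GD_S; auto]. Qed.
Lemma H_n n : H n = INR n * pgd.
Proof. induction n; [unfold H, Ef; simpl; ring | rewrite H_S, IHn, GD_1, S_INR; ring]. Qed.
Lemma HD_n n : HD n = INR n * pg.
Proof. induction n; [unfold HD, Ef; simpl; ring | rewrite HD_S, IHn, G_1, S_INR; ring]. Qed.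
Lemma A_0 : A 0 = 0.
Proof. unfold A, Ef; simpl; ring. Qed.
Lemma AD_0 : AD 0 = 0.
Proof. unfold AD, Ef; simpl; ring. Qed.

End Law.

Lemma closed (pg pgd ph phd pa pad r u : R) (Af ADf : nat -> R)
  (Hu : u <> 0) (Hpa : pa = u * r) (Hpad : pad = r / u)
  (A0 : Af 0%nat = 0) (AD0 : ADf 0%nat = 0)
  (HA : forall n, Af (S n) = Af n + phd * (INR n * pg) + pad * ADf n)
  (HAD : forall n, ADf (S n) = ADf n + ph * (INR n * pgd) + pa * Af n) :
  forall n,
  pa * pad * ADf n = pg * phd * (u * (((1 + r) ^ n - (1 - r) ^ n) / 2) - INR n * pa)
                     + pgd * ph * (((1 + r) ^ n + (1 - r) ^ n) / 2 - 1) /\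
  pa * pad * Af n = pgd * ph * ((1 / u) * (((1 + r) ^ n - (1 - r) ^ n) / 2) - INR n * pad)
                     + pg * phd * (((1 + r) ^ n + (1 - r) ^ n) / 2 - 1).
Proof.
  induction n as [|n [IP IQ]].
  - rewrite A0, AD0. simpl. split; field; auto.
  - split.
    + rewrite HAD.
      replace (pa * pad * (ADf n + ph * (INR n * pgd) + pa * Af n)) with
        (pa * pad * ADf n + pa * pad * ph * (INR n * pgd) + pa * (pa * pad * Af n)) by ring.
      rewrite IP, IQ, S_INR. subst pa pad. cbn [pow]. field; auto.
    + rewrite HA.
      replace (pa * pad * (Af n + phd * (INR n * pg) + pad * ADf n)) with
        (pa * pad * Af n + pa * pad * phd * (INR n * pg) + pad * (pa * pad * ADf n)) by ring.
      rewrite IP, IQ, S_INR. subst pa pad. cbn [pow]. field; auto.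
Qed.

Lemma part1 : forall (pg pgd ph phd pa pad : R) (n : nat),
     0 <= pg <= 1 -> 0 <= pgd <= 1 -> 0 <= ph <= 1 -> 0 <= phd <= 1 ->
     0 < pa <= 1 -> 0 < pad <= 1 ->
     let r := sqrt (pa * pad) in
     expected_ad pg pgd ph phd pa pad n =
       pg * phd / (pa * pad) *
         (sqrt (pa / pad) * (((1 + r) ^ n - (1 - r) ^ n) / 2) - INR n * pa)
     + pgd * ph / (pa * pad) *
         (((1 + r) ^ n + (1 - r) ^ n) / 2 - 1).
Proof.
  intros pg pgd ph phd pa pad n _ _ _ _ [Ha _] [Had _] r.
  set (u := sqrt (pa / pad)).
  assert (Hur : u * r = pa).
  { unfold u, r. rewrite <- sqrt_mult by (apply Rlt_le; try apply Rdiv_lt_0_compat; nra).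
    replace (pa / pad * (pa * pad)) with (pa * pa) by (field; lra).
    apply sqrt_square; lra. }
  assert (Hpu : pad * u = r).
  { unfold u, r. rewrite <- (sqrt_square pad) at 1 by lra.
    rewrite <- sqrt_mult by (apply Rlt_le; try apply Rdiv_lt_0_compat; nra).
    f_equal. field. lra. }
  assert (Hu : u <> 0) by (intro E; rewrite E in Hur; lra).
  assert (Hpad : pad = r / u) by (rewrite <- Hpu; field; auto).
  destruct (closed pg pgd ph phd pa pad r u (A pg pgd ph phd pa pad) (AD pg pgd ph phd pa pad)
    Hu (eq_sym Hur) Hpad (A_0 _ _ _ _ _ _) (AD_0 _ _ _ _ _ _))
    with n as [P _].
  - intro k. rewrite A_S, HD_n. ring.
  - intro k. rewrite AD_S, H_n. ring.
  - change (expected_ad pg pgd ph phd pa pad n) with (AD pg pgd ph phd pa pad n).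
    apply (Rmult_eq_reg_l (pa * pad)); [| nra].
    rewrite P. fold u. field. lra.
Qed.

Theorem mainTheorem5 :
  (forall (pg pgd ph phd pa pad : R) (n : nat),
     0 <= pg <= 1 -> 0 <= pgd <= 1 -> 0 <= ph <= 1 -> 0 <= phd <= 1 ->
     0 < pa <= 1 -> 0 < pad <= 1 ->
     let r := sqrt (pa * pad) in
     expected_ad pg pgd ph phd pa pad n =
       pg * phd / (pa * pad) *
         (sqrt (pa / pad) * (((1 + r) ^ n - (1 - r) ^ n) / 2) - INR n * pa)
     + pgd * ph / (pa * pad) *
         (((1 + r) ^ n + (1 - r) ^ n) / 2 - 1))
  /\
  (forall (p : R) (n : nat), 0 < p <= 1 ->
     expected_ad p p p p p p n = (1 + p) ^ n - INR n * p - 1).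
Proof.
  split; [exact part1|].
  intros p n Hp.
  assert (Hp' : 0 <= p <= 1) by lra.
  pose proof (part1 p p p p p p n Hp' Hp' Hp' Hp' Hp Hp) as E. cbv zeta in E.
  rewrite E. rewrite sqrt_square by lra.
  replace (p / p) with 1 by (field; lra). rewrite sqrt_1.
  field. lra.
Qed.
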